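(* For every integer $k\ge 2$ and every positive integer $n$, \[ t_{2k}(n)\le \frac{2k-3}{3}\,\mathrm{ex}(n, C_{2k}). \]
   Context: All graphs are simple. For a graph $G$, $t(G)$ denotes the number of triangles of $G$. A graph is $F$-free if it contains no (not necessarily induced) subgraph isomorphic to $F$. For $\ell\ge 3$, $t_\ell(n)$ is the maximum of $t(G)$ over all $C_\ell$-free graphs on $n$ vertices, $C_\ell$ being the cycle of length $\ell$. $\mathrm{ex}(n,F)$ is the maximum number of edges of an $F$-free graph on $n$ vertices. *)

(* Defs.v *)
From HB Require Import structures.
From mathcomp Require Import all_boot all_order all_algebra.
Set Implicit Arguments. Unset Strict Implicit. Unset Printing Implicit Defensive.

Definition simple_graph (n : nat) (A : {set 'I_n * 'I_n}) : bool :=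
  [forall x : 'I_n, (x, x) \notin A] &&
  [forall x : 'I_n, forall y : 'I_n, ((x, y) \in A) == ((y, x) \in A)].

Definition adj (n : nat) (A : {set 'I_n * 'I_n}) : rel 'I_n :=
  fun x y => (x, y) \in A.

Definition edges (n : nat) (A : {set 'I_n * 'I_n}) : {set {set 'I_n}} :=
  [set e : {set 'I_n} | [exists x : 'I_n, exists y : 'I_n,
      [&& x != y, e == [set x; y] & adj A x y]]].

Definition nedges (n : nat) (A : {set 'I_n * 'I_n}) : nat := #|edges A|.

Definition ntriangles (n : nat) (A : {set 'I_n * 'I_n}) : nat :=
  #|[set T : {set 'I_n} | (#|T| == 3) &&
      [forall x in T, forall y in T, (x != y) ==> adj A x y]]|.

(* G contains C_l as a (not necessarily induced) subgraph: there are l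
   distinct vertices v_0,...,v_{l-1} with v_i ~ v_{i+1} and v_{l-1} ~ v_0. *)
Definition has_cycle (n l : nat) (A : {set 'I_n * 'I_n}) : bool :=
  [exists s : l.-tuple 'I_n, uniq s && cycle (adj A) s].

Definition C_free (n l : nat) (A : {set 'I_n * 'I_n}) : bool :=
  ~~ has_cycle l A.

Definition ex_cycle (n l : nat) : nat :=
  \max_(A : {set 'I_n * 'I_n} | simple_graph A && C_free l A) nedges A.

Definition t_cycle (l n : nat) : nat :=
  \max_(A : {set 'I_n * 'I_n} | simple_graph A && C_free l A) ntriangles A.

(* Main.v *)
Require Import Defs.
From HB Require Import structures.
From mathcomp Require Import all_boot all_order all_algebra.
From mathcomp Require Import zify.
Import Order.TTheory GRing.Theory Num.Theory.
Set Implicit Arguments. Unset Strict Implicit. Unset Printing Implicit Defensive.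

Lemma ar1 m x y : m <= 2*x -> m <= 2*y -> m <= x + y.
Proof. lia. Qed.
Lemma ar2 u i x y m p : u + i = x + y -> m <= x + y -> u <= p.-1 -> p <= m -> 0 < p -> 0 < i.
Proof. lia. Qed.
Lemma ar3 i p : i.+1 < p -> i.+1 + (p - i.+1).-1 = p.-1.
Proof. lia. Qed.
Lemma ar4 l x : 2 <= l -> l - 2 < x -> l.-1 <= x.
Proof. lia. Qed.
Lemma ar5 m l : m < l -> m <= l.-1.
Proof. lia. Qed.
Lemma ar6 c d l : c = 1 + d -> c <= l.-1 -> d <= l - 2.
Proof. lia. Qed.
Lemma ar7 c d s N : c + d = s -> s <= N.+1 -> 1 <= c -> d <= N.
Proof. lia. Qed.

Section EGsec.
Variable T : finType.
Variable e : rel T.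
Hypothesis esym : forall x y, e x y = e y x.
Hypothesis eirr : forall x, e x x = false.

Definition nb (x : T) (S : {set T}) := [set y in S | e x y].
Definition DD (S : {set T}) := \sum_(x in S) #|nb x S|.
Definition good (S : {set T}) (s : seq T) :=
  [&& uniq s, all (fun x => x \in S) s & sorted e s].

Lemma sorted_take n s : sorted e s -> sorted e (take n s).
Proof.
case: s => [|a t] //=; case: n => [|n] //=.
by rewrite -{1}(cat_take_drop n t) cat_path => /andP[].
Qed.

Lemma good_take (S : {set T}) n s : good S s -> good S (take n s).
Proof.
case/and3P=> u a so; apply/and3P; split; first exact: take_uniq.
  by apply/allP => x /mem_take xs; exact: (allP a).
exact: sorted_take.
Qed.

Lemma nb_del x v (S : {set T}) : v \in S -> x != v ->
  #|nb x S| = e x v + #|nb x (S :\ v)|.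
Proof.
move=> vS xv; rewrite (cardsD1 v); congr (_ + _).
  by rewrite !inE vS.
by apply: eq_card => y; rewrite !inE andbA.
Qed.

Lemma sum_bool (B : {set T}) (P : pred T) :
  \sum_(x in B) (P x : nat) = #|[set x in B | P x]|.
Proof.
rewrite -sum1_card [RHS]big_mkcond [LHS]big_mkcond /=.
apply: eq_bigr => x _; rewrite inE. by case: (x \in B); case: (P x).
Qed.

Lemma DD_del v (S : {set T}) : v \in S -> DD S = DD (S :\ v) + 2 * #|nb v S|.
Proof.
move=> vS; rewrite /DD (big_setD1 _ vS) /=.
rewrite (eq_bigr (fun x => e x v + #|nb x (S :\ v)|)); last first.
  by move=> x; rewrite !inE => /andP[xv _]; apply: nb_del.
rewrite big_split /= sum_bool.
have -> : [set x in S :\ v | e x v] = nb v S.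
  apply/setP => y; rewrite !inE esym.
  by case: eqP => [->|_]; rewrite ?eirr ?andbF ?andbT.
by rewrite addnA addnC mul2n -addnn.
Qed.

Lemma DD_split (C S : {set T}) : C \subset S ->
  (forall x y, x \in C -> y \in S -> e x y -> y \in C) ->
  DD S = DD C + DD (S :\: C).
Proof.
move=> CS cl; rewrite /DD (big_setID C) /=.
have -> : S :&: C = C by apply/setIidPr.
congr (_ + _); apply: eq_bigr => x xC.
  apply: eq_card => y; rewrite !inE.
  case eyx: (e x y); rewrite ?andbF ?andbT //.
  by apply/idP/idP => [yS|yC]; [exact: cl xC yS eyx | exact: (subsetP CS y yC)].
apply: eq_card => y; rewrite !inE.
case eyx: (e x y); rewrite ?andbF ?andbT //.
case yC: (y \in C) => //=.
move: xC; rewrite !inE => /andP[/negP xC xS]; exfalso; apply: xC.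
by apply: (cl y x yC xS); rewrite esym.
Qed.

Lemma DD_small (S : {set T}) m : (forall x, x \in S -> #|nb x S| <= m) -> DD S <= m * #|S|.
Proof.
move=> h; rewrite /DD -sum1_card big_distrr /= muln1.
by apply: leq_sum => x xS; apply: h.
Qed.


Lemma cyc_cross x0 s1 s2 : s1 != [::] -> s2 != [::] -> sorted e (s1 ++ s2) ->
  e (head x0 s1) (head x0 s2) -> e (last x0 s1) (last x0 s2) ->
  cycle e (s1 ++ rev s2).
Proof.
case: s1 => [|a t1] // _; case: s2 => [|c t2] // _.
rewrite /= => so hac hl.
move: so; rewrite cat_path => /andP[p1 p2].
rewrite rcons_path cat_path last_cat p1 /=.
have -> : last (last a t1) (rev (c :: t2)) = c by rewrite rev_cons last_rcons.
rewrite esym hac andbT (lastI c t2) rev_rcons /= hl /= rev_path.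
move: p2 => /= /andP[_ p2].
by rewrite (@eq_path _ _ e) // => u w; rewrite esym.
Qed.

Lemma cyc_ext (S : {set T}) c z y : cycle e c -> uniq c -> all (fun x => x \in S) c ->
  z \in c -> y \in S -> y \notin c -> e y z ->
  good S (y :: rot (index z c) c) /\ size (y :: rot (index z c) c) = (size c).+1.
Proof.
move=> cy uc ac zc yS yc eyz; split; last by rewrite /= size_rot.
have hr : rot (index z c) c = z :: (drop (index z c).+1 c ++ take (index z c) c).
  by rewrite /rot (drop_nth z) ?index_mem // nth_index.
have cr : cycle e (rot (index z c) c) by rewrite rot_cycle.
rewrite hr /= rcons_path in cr; case/andP: cr => pz _.
apply/and3P; split.
- by rewrite cons_uniq mem_rot yc rot_uniq.
- rewrite /= yS /=; apply/allP => x; rewrite mem_rot; exact: (allP ac).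
- by rewrite hr /= eyz pz.
Qed.

Lemma ext_head (S : {set T}) a t w : good S (a :: t) -> w \in S -> w \notin a :: t ->
  e w a -> good S (w :: a :: t).
Proof.
case/and3P=> u al so wS ws ewa; apply/and3P; split.
- by rewrite cons_uniq ws u.
- by rewrite /= wS.
- by rewrite /= ewa.
Qed.

Lemma ext_last (S : {set T}) a t w : good S (a :: t) -> w \in S -> w \notin a :: t ->
  e (last a t) w -> good S (rcons (a :: t) w).
Proof.
case/and3P=> u al so wS ws ewa; apply/and3P; split.
- by rewrite rcons_uniq ws u.
- by rewrite all_rcons wS.
- by rewrite /= rcons_path; apply/andP; split.
Qed.

Lemma closure (S : {set T}) m s (x0 : T) :
  (forall v, v \in S -> m <= 2 * #|nb v S|) ->
  good S s -> s != [::] -> size s <= m ->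
  (forall s', good S s' -> size s' <= size s) ->
  forall z y, z \in s -> y \in S -> e z y -> y \in s.
Proof.
move=> hdeg gs sn sm smax z y zs yS ezy.
apply/negPn/negP => ys.
have gs' := gs; case/and3P: gs' => us als sos.
set p := size s.
have ps : 0 < p by rewrite lt0n size_eq0.
set a := head x0 s; set b := last x0 s.
have aS : a \in S.
  by apply: (allP als); rewrite /a; case: (s) sn => // ? ? _; exact: mem_head.
have bS : b \in S.
  apply: (allP als); rewrite /b; case: (s) sn => // a' t _.
  by have := mem_last a' t; rewrite /=.
have F1 : forall w, w \in nb a S -> w \in s.
  move=> w; rewrite inE => /andP[wS eaw]; apply/negPn/negP => ws.
  move: eaw; rewrite /a; move: gs ws smax sn; case: (s) => [|a' t] //= gs ws smax _ eaw.
  suff: e w a' by move/(ext_head gs wS ws)/smax; rewrite /= ltnn.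
  by rewrite esym.
have F2 : forall w, w \in nb b S -> w \in s.
  move=> w; rewrite inE => /andP[wS eaw]; apply/negPn/negP => ws.
  move: eaw; rewrite /b; move: gs ws smax sn; case: (s) => [|a' t] //= gs ws smax _ eaw.
  by move: eaw => /(ext_last gs wS ws)/smax; rewrite size_rcons /= ltnn.
set SA := [set i : 'I_p | (i.+1 < p) && e a (nth x0 s i.+1)].
set SB := [set i : 'I_p | e b (nth x0 s i)].
have hA : #|nb a S| <= #|SA|.
  apply: leq_trans (leq_imset_card (fun i : 'I_p => nth x0 s i.+1) SA).
  apply: subset_leq_card; apply/subsetP => w wN.
  have ws := F1 w wN.
  have jp : index w s < p by rewrite index_mem.
  have j0 : index w s != 0.
    apply/eqP => j0; move: wN; rewrite inE => /andP[_].
    by rewrite -(nth_index x0 ws) j0 nth0 -/a eirr.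
  have jp' : (index w s).-1 < p by apply: leq_ltn_trans (leq_pred _) jp.
  apply/imsetP; exists (Ordinal jp').
  - rewrite inE /= prednK ?lt0n // jp /= nth_index //.
    by move: wN; rewrite inE => /andP[].
  - by rewrite /= prednK ?lt0n // nth_index.
have hB : #|nb b S| <= #|SB|.
  apply: leq_trans (leq_imset_card (fun i : 'I_p => nth x0 s i) SB).
  apply: subset_leq_card; apply/subsetP => w wN.
  have ws := F2 w wN.
  have jp : index w s < p by rewrite index_mem.
  apply/imsetP; exists (Ordinal jp); last by rewrite /= nth_index.
  rewrite inE /= nth_index //.
  by move: wN; rewrite inE => /andP[].
have lp : p.-1 < p by rewrite prednK.
have hU : #|SA :|: SB| <= p.-1.
  have -> : p.-1 = #|[set: 'I_p] :\ Ordinal lp|.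
    move: (cardsD1 (Ordinal lp) [set: 'I_p]); rewrite cardsT card_ord inE /=. by move=> h; rewrite [in LHS]h add1n.
  apply: subset_leq_card; apply/subsetP => i; rewrite !inE andbT => /orP[/andP[hi _]|hi].
    apply/eqP => /(congr1 val) /= hi'; move: hi; rewrite hi' prednK //; by rewrite ltnn.
  apply/eqP => /(congr1 val) /= hi'; move: hi; rewrite hi' nth_last -/b eirr //.
have hsum : m <= #|nb a S| + #|nb b S|.
  exact: ar1 (hdeg a aS) (hdeg b bS).
have : 0 < #|SA :&: SB|.
  apply: (ar2 (cardsUI SA SB) _ hU sm ps).
  exact: leq_trans hsum (leq_add hA hB).
case/card_gt0P => i; rewrite !inE => /andP[/andP[hi1 hia] hib].
set s1 := take i.+1 s; set s2 := drop i.+1 s.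
have hs : s1 ++ s2 = s by rewrite cat_take_drop.
have sz1 : size s1 = i.+1 by rewrite size_takel // ltnW.
have sz2 : size s2 = p - i.+1 by rewrite size_drop.
have cyc : cycle e (s1 ++ rev s2).
  apply: (cyc_cross (x0:=x0)).
  - by rewrite -size_eq0 sz1.
  - by rewrite -size_eq0 sz2 subn_eq0 -ltnNge.
  - by rewrite hs.
  - by rewrite -!nth0 nth_take // nth_drop addn0.
  - rewrite -!nth_last sz1 sz2 nth_take // nth_drop.
    rewrite ar3 //.
    by rewrite nth_last -/b esym.
have hperm : perm_eq (s1 ++ rev s2) s.
  by rewrite -[X in perm_eq _ X]hs perm_cat2l perm_rev perm_refl.
have h1 : uniq (s1 ++ rev s2) by rewrite (perm_uniq hperm).
have h2 : all (fun x => x \in S) (s1 ++ rev s2).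
  by apply/allP => x; rewrite (perm_mem hperm); exact: (allP als).
have h3 : z \in s1 ++ rev s2 by rewrite (perm_mem hperm).
have h4 : y \notin s1 ++ rev s2 by rewrite (perm_mem hperm).
have h5 : e y z by rewrite esym.
have [g sg] := cyc_ext cyc h1 h2 h3 yS h4 h5.
by have := smax _ g; rewrite sg (perm_size hperm) ltnn.
Qed.

Lemma good_sub (S S' : {set T}) s : S \subset S' -> good S s -> good S' s.
Proof.
move=> sub /and3P[u a so]; apply/and3P; split => //.
by apply/allP => x /(allP a) /(subsetP sub).
Qed.

Lemma EGthm l (S : {set T}) : 2 <= l -> (forall s, good S s -> size s < l) ->
  DD S <= (l - 2) * #|S|.
Proof.
move=> l2; move: {2}#|S| (leqnn #|S|) => N; elim: N S => [|N IH] S hN hS.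
  by move: hN; rewrite leqn0 => /eqP/cards0_eq ->; rewrite /DD big_set0.
case: (boolP [exists v in S, 2 * #|nb v S| <= l - 2]).
  case/exists_inP => v vS hv; rewrite (DD_del vS).
  have hc := cardsD1 v S; rewrite vS in hc.
  have h1 : DD (S :\ v) <= (l - 2) * #|S :\ v|.
    apply: IH; first by move: hN; rewrite hc add1n ltnS.
    by move=> s /(good_sub (subD1set S v)) /hS.
  rewrite [in X in _ <= X]hc mulnDr muln1 addnC leq_add //.
move/exists_inPn => hdeg.
have hdeg' : forall v, v \in S -> l.-1 <= 2 * #|nb v S|.
  by move=> v /hdeg; rewrite -ltnNge; apply: ar4.
case: (set_0Vmem S) => [->|[a aS]]; first by rewrite /DD big_set0.
pose P m := [exists t : m.-tuple T, good S t].
have exP : exists m, P m.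
  by exists 1; apply/existsP; exists [tuple a]; rewrite /good /= aS.
have ubP : forall m, P m -> m <= l.-1.
  by move=> m /existsP[t /hS]; rewrite size_tuple; apply: ar5.
case: (ex_maxnP exP ubP) => m0 /existsP[t gt] maxm.
have smax : forall s', good S s' -> size s' <= size t.
  move=> s' gs'; rewrite size_tuple; apply: maxm; apply/existsP.
  by exists (in_tuple s').
have t1 : 1 <= size t.
  by rewrite size_tuple; apply: maxm; apply/existsP; exists [tuple a]; rewrite /good /= aS.
have tn : (t : seq T) != [::] by rewrite -size_eq0 -lt0n.
have tl : size t <= l.-1 by apply: ar5; apply: hS.
pose C := [set x in (t : seq T)].
have cl := closure a hdeg' gt tn tl smax.
case/and3P: (gt) => ut alt _.
have CS : C \subset S by apply/subsetP => x; rewrite inE => /(allP alt).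
have cl' : forall x y, x \in C -> y \in S -> e x y -> y \in C.
  by move=> x y; rewrite !inE; exact: cl.
rewrite (DD_split CS cl').
have cC : #|C| = size t by rewrite cardsE; apply/card_uniqP.
have := cardsID C S; rewrite (setIidPr CS) => hS'.
have hC : DD C <= (l - 2) * #|C|.
  apply: DD_small => x xC.
  apply: leq_trans (_ : #|C :\ x| <= _).
    by apply: subset_leq_card; apply/subsetP => y; rewrite !inE => /andP[yC exy]; rewrite yC andbT; apply/eqP => yx; move: exy; rewrite yx eirr.
  by apply: (ar6 _ (leq_trans (eq_leq cC) tl)); rewrite (cardsD1 x C) xC.
have hD : DD (S :\: C) <= (l - 2) * #|S :\: C|.
  apply: IH; last by move=> s /(good_sub (subsetDl S C)) /hS.
  by apply: (ar7 hS' hN); rewrite cC.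
by rewrite -hS' mulnDr leq_add.
Qed.

End EGsec.


Lemma sumb (T : finType) (P : pred T) : \sum_(x : T) (P x : nat) = #|[set x | P x]|.
Proof.
rewrite -sum1dep_card [RHS]big_mkcond /=.
by apply: eq_bigr => x _; case: (P x).
Qed.
Lemma ar8 (a b : nat) : 3 = 1 + a -> a = 1 + b -> b == 1.
Proof. lia. Qed.

Section Graph.
Variable n : nat.
Variable A : {set 'I_n * 'I_n}.
Hypothesis hA : simple_graph A.

Let e := adj A.
Lemma asym : forall x y, e x y = e y x.
Proof.
move=> x y; case/andP: hA => _ /forallP /(_ x) /forallP /(_ y) /eqP.
by rewrite /e /adj.
Qed.
Lemma airr : forall x, e x x = false.
Proof.
move=> x; case/andP: hA => /forallP /(_ x) h _.
by rewrite /e /adj; apply/negbTE.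
Qed.

Definition N x := nb e x [set: 'I_n].

Lemma inN x y : (y \in N x) = e x y.
Proof. by rewrite !inE. Qed.

Lemma nbhd_bound v k : 2 <= k -> C_free (2 * k) A ->
  DD e (N v) <= (2 * k - 3) * #|N v|.
Proof.
move=> k2 cf.
have -> : 2 * k - 3 = (2 * k).-1 - 2 by lia.
apply: (EGthm asym airr); first lia.
move=> s gs; rewrite ltnNge; apply/negP => hs.
set s' := take (2 * k).-1 s.
have gs' : good e (N v) s' by apply: good_take.
have sz' : size s' = (2 * k).-1 by rewrite size_takel.
case/and3P: gs' => us' als' sos'.
have vs' : v \notin s'.
  by apply/negP => /(allP als'); rewrite inN airr.
have sz : size (v :: s') == 2 * k by rewrite /= sz'; apply/eqP; lia.
move/negP: cf; apply; apply/existsP; exists (Tuple sz); rewrite /=.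
rewrite vs' us' /= rcons_path.
case Es : s' sz' als' sos' => [|a t]; first by move=> /= h; lia.
move=> _ als2 sos2; rewrite /= -/e.
have ha : e v a by rewrite -inN; apply: (allP als2); exact: mem_head.
have hl : e v (last a t).
  by rewrite -inN; apply: (allP als2); exact: mem_last.
by rewrite -/e ha /=; apply/andP; split => //; rewrite asym.
Qed.

Definition Tri := [set T : {set 'I_n} | (#|T| == 3) &&
      [forall x in T, forall y in T, (x != y) ==> adj A x y]].

Lemma ntri_Tri : ntriangles A = #|Tri|.
Proof. by []. Qed.

Lemma tri_adj T x y : T \in Tri -> x \in T -> y \in T -> x != y -> e x y.
Proof.
rewrite inE => /andP[_ /forall_inP h] xT yT xy.
by move: (h x xT) => /forall_inP /(_ y yT) /implyP; apply.
Qed.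

Lemma tri_six T : T \in Tri ->
  \sum_x \sum_y ((x \in T) && (y \in T) && (x != y) : nat) = 6.
Proof.
move=> TT; have c3 : #|T| = 3 by move: TT; rewrite inE => /andP[/eqP].
rewrite (eq_bigr (fun x => (x \in T : nat) * 2)); last first.
  move=> x _; case xT: (x \in T) => /=; last by rewrite big1.
  rewrite sumb mul1n.
  have -> : #|[set y | (y \in T) && (x != y)]| = #|T :\ x|.
    by apply: eq_card => y; rewrite !inE andbC eq_sym.
  by move: (cardsD1 x T); rewrite xT c3 => [[]].
rewrite -big_distrl /= sumb (_ : #|[set x | x \in T]| = 3) //.
by rewrite -c3; apply: eq_card => y; rewrite inE.
Qed.

Lemma tri_pair x y :
  #|[set T in Tri | (x \in T) && (y \in T) && (x != y)]| <= e x y * #|nb e y (N x)|.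
Proof.
case exy: (e x y); last first.
  rewrite mul0n leqn0 cards_eq0; apply/eqP/setP => T; rewrite in_set [in RHS]inE.
  apply/negP => /andP[TT /andP[/andP[xT yT] xy]].
  by move: (tri_adj TT xT yT xy); rewrite exy.
rewrite mul1n.
apply: leq_trans (leq_imset_card (fun z => [set x; y; z]) _).
apply: subset_leq_card; apply/subsetP => T; rewrite in_set => /andP[TT /andP[/andP[xT yT] xy]].
have c3 : #|T| = 3 by move: TT; rewrite inE => /andP[/eqP].
have yTx : y \in T :\ x by rewrite !inE eq_sym xy.
have c1 : #|T :\ x :\ y| == 1.
  have h1 := cardsD1 x T; have h2 := cardsD1 y (T :\ x).
  rewrite xT c3 in h1; rewrite yTx in h2; exact: ar8 h1 h2.
case/cards1P: c1 => z hz.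
have zR : z \in T :\ x :\ y by rewrite hz set11.
move: (zR); rewrite !inE => /andP[zy /andP[zx zT]].
apply/imsetP; exists z.
  rewrite !inE (tri_adj TT xT zT) ?(tri_adj TT yT zT) //; by rewrite eq_sym.
apply/setP => w; rewrite !inE.
case: (w =P x) => [->|wx] /=; first by rewrite xT.
case: (w =P y) => [->|wy] /=; first by rewrite yT.
apply/idP/idP => [wT|/eqP ->//].
have : w \in T :\ x :\ y by rewrite !inE wT andbT; apply/andP; split; apply/eqP.
by rewrite hz inE.
Qed.

Lemma tri_count : 6 * #|Tri| <= \sum_x DD e (N x).
Proof.
rewrite mulnC -sum_nat_const.
rewrite (eq_bigr (fun T : {set 'I_n} => \sum_(x : 'I_n) \sum_(y : 'I_n) ((x \in T) && (y \in T) && (x != y) : nat)));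
  last by move=> T TT; rewrite tri_six.
rewrite exchange_big /=; apply: leq_sum => x _.
rewrite exchange_big /= /DD [in X in _ <= X]big_mkcond /=; apply: leq_sum => y _.
rewrite sum_bool inN; apply: leq_trans (tri_pair x y) _.
by case: (e x y); rewrite ?mul1n ?mul0n.
Qed.

Lemma edge_count : \sum_x #|N x| <= 2 * nedges A.
Proof.
apply: (@leq_trans (\sum_x #|[set E in edges A | x \in E]|)).
  apply: leq_sum => x _.
  rewrite -(@card_in_imset _ _ (fun y => [set x; y])); last first.
    move=> y1 y2; rewrite !inN => h1 h2 heq.
    have : y1 \in [set x; y2] by rewrite -heq !inE eqxx orbT.
    rewrite !inE => /orP[/eqP h|/eqP //]; by move: h1; rewrite h airr.
  apply: subset_leq_card; apply/subsetP => E /imsetP[y]; rewrite inN => exy ->.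
  rewrite !inE eqxx andbT; apply/existsP; exists x; apply/existsP; exists y.
  rewrite eqxx -/e exy !andbT; apply/eqP => h; by move: exy; rewrite h airr.
rewrite (eq_bigr (fun x : 'I_n => \sum_(E in edges A) (x \in E : nat))); last first.
  by move=> x _; rewrite sum_bool.
rewrite exchange_big /= mulnC /nedges -sum_nat_const; apply: eq_leq.
apply: eq_bigr => E; rewrite inE => /existsP[a /existsP[b /and3P[ab /eqP -> _]]].
rewrite sumb.
have -> : #|[set x | x \in [set a; b]]| = #|[set a; b]| by apply: eq_card => z; rewrite inE.
by rewrite cards2 ab.
Qed.

Lemma main3 k : 2 <= k -> C_free (2 * k) A ->
  3 * ntriangles A <= (2 * k - 3) * nedges A.
Proof.
move=> k2 cf; rewrite ntri_Tri -(@leq_pmul2l 2) // mulnA mulnCA.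
apply: leq_trans (tri_count) _.
apply: leq_trans (_ : \sum_x (2 * k - 3) * #|N x| <= _).
  by apply: leq_sum => x _; apply: nbhd_bound.
by rewrite -big_distrr /= leq_mul2l edge_count orbT.
Qed.

End Graph.

Local Open Scope ring_scope.
Lemma ratl (t a b : nat) : (t * 3 <= a * b)%N -> (t%:R : rat) <= (a%:R / 3%:R) * b%:R.
Proof.
move=> h; rewrite mulrAC ler_pdivlMr ?ltr0n // -!natrM ler_nat.
by [].
Qed.

Unset Implicit Arguments.
Theorem theorem1 (k n : nat) (hk : (2 <= k)%N) (hn : (0 < n)%N) :
  ((t_cycle (2 * k) n)%:R : rat)
    <= ((2 * k - 3)%N%:R / 3%:R) * (ex_cycle n (2 * k))%:R.
Proof.
apply: ratl; rewrite -leq_divRL //.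
apply/bigmax_leqP => A /andP[sA cf]; rewrite leq_divRL // mulnC.
apply: leq_trans (main3 sA hk cf) _.
by rewrite leq_mul2l; apply/orP; right; apply: (leq_bigmax_cond A); rewrite sA cf.
Qed.
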